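(* Let $M$ and $N$ be matroids and let $P$ be a tensor product of $M$ and $N$. Let $S,T$ be disjoint subsets of $E(M)$ and $M'=M\setminus S/T$. Then $P'=P\setminus(S\times E(N))/(T\times E(N))$ is a tensor product of $M'$ and $N$.
   Context: Let $M,N$ be matroids on $E(M),E(N)$. A quasi product of $M$ and $N$ is a matroid $P$ on $E(M)\times E(N)$ such that: for every non-loop $e\in E(M)$ the map $x\mapsto(e,x)$ is an isomorphism from $N$ onto $P|_{\{e\}\times E(N)}$; for every non-loop $f\in E(N)$ the map $x\mapsto(x,f)$ is an isomorphism from $M$ onto $P|_{E(M)\times\{f\}}$; for a loop $e$ of $M$, $P|_{\{e\}\times E(N)}$ has rank $0$; for a loop $f$ of $N$, $P|_{E(M)\times\{f\}}$ has rank $0$. A tensor product of $M$ and $N$ is a quasi product of rank $\mathrm{rk}(M)\mathrm{rk}(N)$. *)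

(* Defs.v *)
From mathcomp Require Import all_boot.
Set Implicit Arguments. Unset Strict Implicit. Unset Printing Implicit Defensive.

(* A (finite) matroid on a finite carrier type T: a ground set E and a rank
   function r, only meaningful on subsets of E. *)
Record matroid (T : finType) := Matroid { ground : {set T}; rk : {set T} -> nat }.

Definition is_matroid (T : finType) (M : matroid T) : Prop :=
  [/\ (forall X : {set T}, X \subset ground M -> rk M X <= #|X|),
      (forall X Y : {set T}, X \subset Y -> Y \subset ground M -> rk M X <= rk M Y) &
      (forall X Y : {set T}, X \subset ground M -> Y \subset ground M ->
         rk M (X :|: Y) + rk M (X :&: Y) <= rk M X + rk M Y)].

Definition mrank (T : finType) (M : matroid T) : nat := rk M (ground M).

Definition mdelete (T : finType) (M : matroid T) (S : {set T}) : matroid T :=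
  Matroid (ground M :\: S) (rk M).
Definition mcontract (T : finType) (M : matroid T) (C : {set T}) : matroid T :=
  Matroid (ground M :\: C) (fun X => rk M (X :|: C) - rk M C).

Definition minor (T : finType) (M : matroid T) (S C : {set T}) : matroid T :=
  mcontract (mdelete M S) C.

Definition is_loop (T : finType) (M : matroid T) (e : T) : Prop :=
  e \in ground M /\ rk M [set e] = 0.
Definition is_nonloop (T : finType) (M : matroid T) (e : T) : Prop :=
  e \in ground M /\ rk M [set e] <> 0.

(* The map x |-> (e,x)
   is a bijection E(N) -> {e} x E(N); it is an isomorphism N -> P|_{e}xE(N)
   iff it preserves the rank of every subset of E(N). *)
Definition is_quasi_product (T1 T2 : finType) (M : matroid T1) (N : matroid T2)
    (P : matroid (T1 * T2)%type) : Prop :=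
  [/\ is_matroid P /\ ground P = setX (ground M) (ground N),
      (forall e, is_nonloop M e -> forall X : {set T2}, X \subset ground N ->
          rk P [set (e, x) | x in X] = rk N X),
      (forall f, is_nonloop N f -> forall X : {set T1}, X \subset ground M ->
          rk P [set (x, f) | x in X] = rk M X),
      (forall e, is_loop M e -> rk P (setX [set e] (ground N)) = 0) &
      (forall f, is_loop N f -> rk P (setX (ground M) [set f]) = 0)].

Definition is_tensor_product (T1 T2 : finType) (M : matroid T1) (N : matroid T2)
    (P : matroid (T1 * T2)%type) : Prop :=
  is_quasi_product M N P /\ mrank P = mrank M * mrank N.

(* Main.v *)
Require Import Defs.
From mathcomp Require Import all_boot.
From mathcomp Require Import zify.
Set Implicit Arguments. Unset Strict Implicit. Unset Printing Implicit Defensive.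


Lemma rk_card (T : finType) (M : matroid T) (X : {set T}) : is_matroid M ->
  X \subset ground M -> rk M X <= #|X|.
Proof. by case=> h _ _; apply: h. Qed.
Lemma rk_mono (T : finType) (M : matroid T) (X Y : {set T}) : is_matroid M ->
  X \subset Y -> Y \subset ground M -> rk M X <= rk M Y.
Proof. by case=> _ h _; apply: h. Qed.
Lemma rk_submod (T : finType) (M : matroid T) (X Y : {set T}) : is_matroid M ->
  X \subset ground M -> Y \subset ground M ->
         rk M (X :|: Y) + rk M (X :&: Y) <= rk M X + rk M Y.
Proof. by case=> _ _ h; apply: h. Qed.
Arguments rk_card {T M X} HM.
Arguments rk_mono {T M X Y} HM.
Arguments rk_submod {T M X Y} HM.
Lemma rk_set0 (T : finType) (M : matroid T) : is_matroid M -> rk M set0 = 0.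
Proof. move=> HM; have := rk_card HM (sub0set _). by rewrite cards0 leqn0 => /eqP. Qed.

Definition spans (T : finType) (M : matroid T) (A Y : {set T}) := rk M (A :|: Y) = rk M A.

Lemma spans_sub (T : finType) (M : matroid T) (A Y : {set T}) : Y \subset A -> spans M A Y.
Proof. by move=> /setUidPl; rewrite /spans => ->. Qed.

Lemma spans_eqr (T : finType) (M : matroid T) (A Y : {set T}) :
  A \subset Y -> rk M A = rk M Y -> spans M A Y.
Proof. by move=> AY e; rewrite /spans (setUidPr AY) e. Qed.

Lemma spans_subr (T : finType) (M : matroid T) (A Y Z : {set T}) : is_matroid M ->
  A :|: Y \subset ground M -> spans M A Y -> Z \subset Y -> spans M A Z.
Proof.
move=> HM sE sp ZY; apply/eqP; rewrite eqn_leq; apply/andP; split.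
- rewrite -sp; apply: rk_mono HM _ sE; exact: setUS.
- apply: rk_mono HM (subsetUl _ _) _; apply: subset_trans sE; exact: setUS.
Qed.

Lemma spans_mono (T : finType) (M : matroid T) (A A' Y : {set T}) : is_matroid M ->
  A \subset A' -> A' :|: Y \subset ground M -> spans M A Y -> spans M A' Y.
Proof.
move=> HM AA' sE sp; move: (sE); rewrite subUset => /andP[A'E YE].
have AE : A \subset ground M by apply: subset_trans AA' A'E.
have AYE : A :|: Y \subset ground M by rewrite subUset AE.
have h := rk_submod HM AYE A'E.
have e : A :|: Y :|: A' = A' :|: Y by rewrite setUAC (setUidPr AA') .
rewrite e in h.
have h2 : rk M A <= rk M ((A :|: Y) :&: A').
  apply: rk_mono HM _ _; first by rewrite subsetI subsetUl AA'.
  exact: subset_trans (subsetIr _ _) A'E.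
have h3 : rk M A' <= rk M (A' :|: Y) by apply: rk_mono HM (subsetUl _ _) sE.
rewrite /spans in sp *; lia.
Qed.

Lemma spansU (T : finType) (M : matroid T) (A Y Z : {set T}) : is_matroid M ->
  A :|: Y :|: Z \subset ground M -> spans M A Y -> spans M A Z -> spans M A (Y :|: Z).
Proof.
move=> HM sE sY sZ; move: (sE); rewrite !subUset => /andP[/andP[AE YE] ZE].
have AYE : A :|: Y \subset ground M by rewrite subUset AE.
have AZE : A :|: Z \subset ground M by rewrite subUset AE.
have h := rk_submod HM AYE AZE.
have e : A :|: Y :|: (A :|: Z) = A :|: (Y :|: Z).
  by apply/setP => x; rewrite !inE; do ![case: (_ \in _)].
rewrite e in h.
have h2 : rk M A <= rk M ((A :|: Y) :&: (A :|: Z)).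
  apply: rk_mono HM _ _; first by rewrite subsetI !subsetUl.
  exact: subset_trans (subsetIl _ _) AYE.
have h3 : rk M A <= rk M (A :|: (Y :|: Z)).
  by apply: rk_mono HM (subsetUl _ _) _; rewrite subUset AE subUset YE.
rewrite /spans in sY sZ *; lia.
Qed.

Lemma spans_trans (T : finType) (M : matroid T) (A Y Z : {set T}) : is_matroid M ->
  A :|: Y :|: Z \subset ground M -> spans M A Y -> spans M (A :|: Y) Z -> spans M A Z.
Proof.
move=> HM sE sY sZ; move: (sE); rewrite !subUset => /andP[/andP[AE YE] ZE].
have h1 : rk M (A :|: Z) <= rk M (A :|: Y :|: Z).
  apply: rk_mono HM _ sE; by rewrite setUAC subsetUl.
have h3 : rk M A <= rk M (A :|: Z).
  by apply: rk_mono HM (subsetUl _ _) _; rewrite subUset AE.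
rewrite /spans in sY sZ *; lia.
Qed.

Lemma spans_loop (T : finType) (M : matroid T) (A Z : {set T}) : is_matroid M ->
  A \subset ground M -> Z \subset ground M -> rk M Z = 0 -> spans M A Z.
Proof.
move=> HM AE ZE r0; have h := rk_submod HM AE ZE.
have h3 : rk M A <= rk M (A :|: Z).
  by apply: rk_mono HM (subsetUl _ _) _; rewrite subUset AE.
rewrite /spans; lia.
Qed.

Lemma spans_le (T : finType) (M : matroid T) (A Y : {set T}) : is_matroid M ->
  A :|: Y \subset ground M -> spans M A Y -> rk M Y <= rk M A.
Proof. by move=> HM sE <-; apply: rk_mono HM (subsetUr _ _) sE. Qed.

Lemma spans_pts (T : finType) (M : matroid T) (A Y : {set T}) : is_matroid M ->
  A \subset ground M -> Y \subset ground M ->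
  (forall y, y \in Y -> spans M A [set y]) -> spans M A Y.
Proof.
move=> HM AE; move: {2}#|Y| (leqnn #|Y|) => n; elim: n Y => [|n IH] Y.
  rewrite leqn0 cards_eq0 => /eqP -> _ _; by rewrite /spans setU0.
move=> Yn YE h; case: (set_0Vmem Y) => [-> | [y yY]]; first by rewrite /spans setU0.
rewrite -(setD1K yY).
have yE : [set y] \subset ground M by rewrite sub1set (subsetP YE).
have DE : Y :\ y \subset ground M by apply: subset_trans (subsetDl _ _) YE.
apply: spansU => //.
- by rewrite !subUset AE yE DE.
- by apply: h.
- apply: IH => //.
  + move: Yn; rewrite (cardsD1 y Y) yY; lia.
  + by move=> z /setD1P[_ zY]; apply: h.
Qed.

Lemma indep_sub (T : finType) (M : matroid T) (X Y : {set T}) : is_matroid M ->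
  Y \subset X -> X \subset ground M -> rk M X = #|X| -> rk M Y = #|Y|.
Proof.
move=> HM YX XE rX.
have YE : Y \subset ground M by apply: subset_trans YX XE.
have DE : X :\: Y \subset ground M by apply: subset_trans (subsetDl _ _) XE.
have h := rk_submod HM YE DE.
have e1 : Y :|: (X :\: Y) = X.
  apply/setP => x; rewrite !inE; case: (boolP (x \in Y)) => //= xY.
  by rewrite (subsetP YX).
have e2 : Y :&: (X :\: Y) = set0.
  by apply/setP => x; rewrite !inE; case: (x \in Y); rewrite ?andbF.
rewrite e1 e2 rk_set0 // in h.
have c := cardsID Y X; rewrite (setIidPr YX) in c.
have h1 := rk_card HM YE; have h2 := rk_card HM DE.
lia.
Qed.

Lemma basis_ext (T : finType) (M : matroid T) (I X : {set T}) : is_matroid M ->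
  I \subset X -> X \subset ground M -> rk M I = #|I| ->
  exists B : {set T}, [/\ I \subset B, B \subset X, rk M B = #|B| & rk M B = rk M X].
Proof.
move=> HM; move: {2}#|X :\: I| (leqnn #|X :\: I|) => n; elim: n I => [|n IH] I Hn IX XE rI.
  exists I; split=> //; congr (rk M _); apply/eqP; rewrite eqEsubset IX /=.
  move: Hn; rewrite leqn0 cards_eq0 setD_eq0 //.
have IE : I \subset ground M by apply: subset_trans IX XE.
case: (boolP [forall x in X, rk M (I :|: [set x]) == rk M I]) => [/forall_inP all | /forall_inPn [x xX nx]].
  exists I; split=> //; apply/eqP; rewrite eqn_leq; apply/andP; split.
    by apply: rk_mono HM IX XE.
  have sp : spans M I X by apply: spans_pts => // y yX; apply/eqP; apply: all.
  by apply: spans_le HM _ sp; rewrite subUset IE.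
have xE : x \in ground M by apply: (subsetP XE).
have IxE : I :|: [set x] \subset ground M by rewrite subUset IE sub1set.
have h1 := rk_card HM IxE.
have h2 : rk M I <= rk M (I :|: [set x]) by apply: rk_mono HM (subsetUl _ _) IxE.
have xI : x \notin I.
  by apply/negP => xI; move: nx; rewrite (setUidPl _) ?sub1set // eqxx.
have cx : #|I :|: [set x]| = #|I| + 1 by rewrite setUC cardsU1 xI; lia.
have rIx : rk M (I :|: [set x]) = #|I :|: [set x]|.
  move/negP: nx => nx; rewrite cx; apply/eqP; rewrite eqn_leq; apply/andP; split.
    by rewrite -cx.
  rewrite -rI addn1; rewrite ltn_neqAle h2 andbT; apply/negP => /eqP e; apply: nx; by rewrite e.
have lt : #|X :\: (I :|: [set x])| <= n.
  have : #|X :\: (I :|: [set x])| < #|X :\: I|.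
    rewrite (cardsD1 x (X :\: I)) inE xX xI /= add1n ltnS.
    apply: subset_leq_card; apply/subsetP => z; rewrite !inE.
    by case: (z == x); case: (z \in I); case: (z \in X).
  lia.
have IxX : I :|: [set x] \subset X by rewrite subUset IX sub1set.
have [B [H1 H2 H3 H4]] := IH (I :|: [set x]) lt IxX XE rIx.
exists B; split=> //; exact: subset_trans (subsetUl _ _) H1.
Qed.


Lemma setX1l (T1 T2 : finType) (e : T1) (X : {set T2}) :
  setX [set e] X = [set (e, x) | x in X].
Proof.
apply/setP => -[a b]; rewrite in_setX in_set1; apply/andP/imsetP.
  by case=> /eqP -> bX; exists b.
by case=> x xX [-> ->]; rewrite eqxx.
Qed.

Lemma setX1r (T1 T2 : finType) (f : T2) (X : {set T1}) :
  setX X [set f] = [set (x, f) | x in X].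
Proof.
apply/setP => -[a b]; rewrite in_setX in_set1; apply/andP/imsetP.
  by case=> aX /eqP ->; exists a.
by case=> x xX [-> ->]; rewrite eqxx.
Qed.


Lemma tp_matroid (T1 T2 : finType) (M : matroid T1) (N : matroid T2) P :
  is_tensor_product M N P -> is_matroid P.
Proof. by case=> [[[]]]. Qed.
Lemma tp_ground (T1 T2 : finType) (M : matroid T1) (N : matroid T2) P :
  is_tensor_product M N P -> ground P = setX (ground M) (ground N).
Proof. by case=> [[[]]]. Qed.
Lemma tp_row (T1 T2 : finType) (M : matroid T1) (N : matroid T2) P e (X : {set T2}) :
  is_tensor_product M N P -> is_nonloop M e -> X \subset ground N ->
  rk P (setX [set e] X) = rk N X.
Proof. by case=> [[_ h _ _ _]] _ ne XE; rewrite setX1l h. Qed.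
Lemma tp_col (T1 T2 : finType) (M : matroid T1) (N : matroid T2) P f (X : {set T1}) :
  is_tensor_product M N P -> is_nonloop N f -> X \subset ground M ->
  rk P (setX X [set f]) = rk M X.
Proof. by case=> [[_ _ h _ _]] _ ne XE; rewrite setX1r h. Qed.
Lemma tp_loopN (T1 T2 : finType) (M : matroid T1) (N : matroid T2) P f :
  is_tensor_product M N P -> is_loop N f -> rk P (setX (ground M) [set f]) = 0.
Proof. by case=> [[_ _ _ _ h]] _ ne; rewrite h. Qed.
Lemma tp_rank (T1 T2 : finType) (M : matroid T1) (N : matroid T2) P :
  is_tensor_product M N P -> rk P (setX (ground M) (ground N)) = mrank M * mrank N.
Proof. by move=> H; rewrite -(tp_ground H); case: H. Qed.

Lemma nonloop_of (T : finType) (M : matroid T) (B : {set T}) a :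
  is_matroid M -> B \subset ground M -> rk M B = #|B| -> a \in B -> is_nonloop M a.
Proof.
move=> HM BE rB aB; have aE : [set a] \subset ground M.
  by rewrite sub1set (subsetP BE).
split; first by rewrite -sub1set.
by rewrite (indep_sub HM _ BE rB) ?cards1 // sub1set.
Qed.

Lemma UB (T1 T2 : finType) (M : matroid T1) (N : matroid T2) P
   (A BA : {set T1}) (BN : {set T2}) :
  is_matroid M -> is_matroid N -> is_tensor_product M N P ->
  BA \subset A -> A \subset ground M -> rk M BA = #|BA| -> rk M BA = rk M A ->
  BN \subset ground N -> rk N BN = #|BN| -> rk N BN = rk N (ground N) ->
  spans P (setX BA BN) (setX A (ground N)).
Proof.
move=> HM HN HT BAA AE rBA eBA BNE rBN eBN.
have HP := tp_matroid HT; have gP := tp_ground HT.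
have BAE : BA \subset ground M by apply: subset_trans BAA AE.
have s1 : spans P (setX BA BN) (setX BA (ground N)).
  apply: spans_pts => //; first by rewrite gP setXS.
    by rewrite gP setXS.
  move=> [a y]; rewrite in_setX => /andP[aB yE].
  have nl := nonloop_of HM BAE rBA aB.
  have aE : [set a] \subset ground M by rewrite sub1set (subsetP BAE).
  have sp : spans P (setX [set a] BN) (setX [set a] (ground N)).
    apply: spans_eqr; first by rewrite setXS.
    by rewrite (tp_row HT nl BNE) (tp_row HT nl (subxx _)).
  have sp2 : spans P (setX BA BN) (setX [set a] (ground N)).
    apply: (spans_mono HP _ _ sp); first by rewrite setXS // sub1set.
    by rewrite gP subUset !setXS.
  apply: (spans_subr HP _ sp2); first by rewrite gP subUset !setXS.
  by rewrite sub1set in_setX in_set1 eqxx.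
have s2 : spans P (setX BA (ground N)) (setX A (ground N)).
  apply: spans_pts => //; first by rewrite gP setXS.
    by rewrite gP setXS.
  move=> [a y]; rewrite in_setX => /andP[aA yE].
  have yE1 : [set y] \subset ground N by rewrite sub1set.
  have aE1 : [set (a, y)] \subset ground P by rewrite gP sub1set in_setX yE (subsetP AE).
  case: (eqVneq (rk N [set y]) 0) => [y0 | ynz].
    apply: spans_loop => //; first by rewrite gP setXS.
    apply/eqP; rewrite -leqn0 -(tp_loopN HT (conj yE y0)).
    apply: rk_mono HP _ _; last by rewrite gP setXS.
    by rewrite sub1set in_setX in_set1 eqxx (subsetP AE).
  have nl : is_nonloop N y by split=> //; apply/eqP.
  have sp : spans P (setX BA [set y]) (setX A [set y]).
    apply: spans_eqr; first by rewrite setXS.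
    by rewrite (tp_col HT nl BAE) (tp_col HT nl AE).
  have sp2 : spans P (setX BA (ground N)) (setX A [set y]).
    apply: (spans_mono HP _ _ sp); first by rewrite setXS.
    by rewrite gP subUset !setXS.
  apply: (spans_subr HP _ sp2); first by rewrite gP subUset !setXS.
  by rewrite sub1set in_setX in_set1 eqxx aA.
apply: (spans_trans HP _ s1).
  by rewrite gP !subUset !setXS.
by rewrite (setUidPr (setXS (subxx _) BNE)).
Qed.

Lemma basis_ex (T : finType) (M : matroid T) (X : {set T}) : is_matroid M ->
  X \subset ground M ->
  exists B : {set T}, [/\ B \subset X, rk M B = #|B| & rk M B = rk M X].
Proof.
move=> HM XE; have [B [_ h1 h2 h3]] := basis_ext HM (sub0set X) XE (etrans (rk_set0 HM) (esym (cards0 _))).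
by exists B.
Qed.

Lemma IND (T1 T2 : finType) (M : matroid T1) (N : matroid T2) P
   (B : {set T1}) (BN : {set T2}) (W : {set T1 * T2}) :
  is_matroid M -> is_matroid N -> is_tensor_product M N P ->
  B \subset ground M -> rk M B = #|B| -> rk M B = rk M (ground M) ->
  BN \subset ground N -> rk N BN = #|BN| -> rk N BN = rk N (ground N) ->
  W \subset setX B BN -> rk P W = #|W|.
Proof.
move=> HM HN HT BE rB eB BNE rBN eBN WB.
have HP := tp_matroid HT; have gP := tp_ground HT.
have sp := UB HM HN HT BE (subxx _) rB eB BNE rBN eBN.
have le : rk P (setX (ground M) (ground N)) <= rk P (setX B BN).
  by apply: spans_le HP _ sp; rewrite gP subUset !setXS.
have BBE : setX B BN \subset ground P by rewrite gP setXS.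
have h := rk_card HP BBE.
have e : rk P (setX B BN) = #|setX B BN|.
  apply/eqP; rewrite eqn_leq h /=; apply: leq_trans le.
  by rewrite (tp_rank HT) /mrank -eB -eBN rB rBN cardsX.
by apply: indep_sub HP WB BBE e.
Qed.

Lemma RX (T1 T2 : finType) (M : matroid T1) (N : matroid T2) P (A : {set T1}) :
  is_matroid M -> is_matroid N -> is_tensor_product M N P ->
  A \subset ground M -> rk P (setX A (ground N)) = rk M A * rk N (ground N).
Proof.
move=> HM HN HT AE.
have HP := tp_matroid HT; have gP := tp_ground HT.
have [BA [BAA rBA eBA]] := basis_ex HM AE.
have BAE : BA \subset ground M by apply: subset_trans BAA AE.
have [B [H1 H2 H3 H4]] := basis_ext HM BAE (subxx _) rBA.
have [BN [BNE rBN eBN]] := basis_ex HN (subxx _).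
have sp := UB HM HN HT BAA AE rBA eBA BNE rBN eBN.
have le : rk P (setX A (ground N)) <= rk P (setX BA BN).
  by apply: spans_le HP _ sp; rewrite gP subUset !setXS.
have i := IND HM HN HT H2 H3 H4 BNE rBN eBN (setXS H1 (subxx BN)).
rewrite cardsX -rBA -rBN eBA eBN in i.
apply/eqP; rewrite eqn_leq; apply/andP; split.
  by rewrite -i le.
rewrite -i; apply: rk_mono HP _ _; first by rewrite setXS.
by rewrite gP setXS.
Qed.

Lemma minor_matroid (T : finType) (M : matroid T) (S C : {set T}) :
  is_matroid M -> C \subset ground M -> is_matroid (minor M S C).
Proof.
move=> HM CE; rewrite /minor /mcontract /mdelete /=.
have gs : forall X : {set T}, X \subset (ground M :\: S) :\: C -> X \subset ground M.
  move=> X XG; apply: subset_trans XG _; apply: subset_trans (subsetDl _ _) (subsetDl _ _).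
have lc : forall X : {set T}, X \subset ground M -> rk M C <= rk M (X :|: C).
  by move=> X XE; apply: rk_mono HM (subsetUr _ _) _; rewrite subUset XE.
split.
- move=> X /gs XE; have h := rk_submod HM XE CE; have h2 := rk_card HM XE; rewrite /=; lia.
- move=> X Y XY /gs YE /=; apply: leq_sub2r; apply: rk_mono HM _ _.
    by apply: setSU.
  by rewrite subUset YE.
- move=> X Y /gs XE /gs YE /=.
  have XCE : X :|: C \subset ground M by rewrite subUset XE.
  have YCE : Y :|: C \subset ground M by rewrite subUset YE.
  have h := rk_submod HM XCE YCE.
  have e1 : X :|: C :|: (Y :|: C) = X :|: Y :|: C.
    by apply/setP => x; rewrite !inE; do ![case: (_ \in _)].
  have e2 : (X :|: C) :&: (Y :|: C) = X :&: Y :|: C.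
    by apply/setP => x; rewrite !inE; do ![case: (_ \in _)].
  rewrite e1 e2 in h.
  have := lc _ XE; have := lc _ YE.
  have := lc (X :&: Y) (subset_trans (subsetIl _ _) XE).
  have := lc (X :|: Y) ltac:(by rewrite subUset XE).
  lia.
Qed.

Lemma row_minor (T1 T2 : finType) (M : matroid T1) (N : matroid T2) P
   (T : {set T1}) (e : T1) (X : {set T2}) :
  is_matroid M -> is_matroid N -> is_tensor_product M N P ->
  T \subset ground M -> e \in ground M -> e \notin T ->
  rk M ([set e] :|: T) - rk M T <> 0 -> X \subset ground N ->
  rk P (setX [set e] X :|: setX T (ground N)) - rk P (setX T (ground N)) = rk N X.
Proof.
move=> HM HN HT TE eE eT ne XE.
have HP := tp_matroid HT; have gP := tp_ground HT.
have [BT [BTT rBT eBT]] := basis_ex HM TE.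
have BTE : BT \subset ground M by apply: subset_trans BTT TE.
have rTE := RX HM HN HT TE.
have eE1 : [set e] \subset ground M by rewrite sub1set.
have eTE : [set e] :|: T \subset ground M by rewrite subUset eE1.
set J := BT :|: [set e].
have JE : J \subset ground M by rewrite subUset BTE.
have spBT : spans M BT T by apply: spans_eqr.
have spJ : spans M J T.
  by apply: (spans_mono HM _ _ spBT); rewrite ?subsetUl // !subUset BTE eE1.
have rJ : rk M J = rk M ([set e] :|: T).
  rewrite -spJ; congr (rk M _); apply/setP => x; rewrite !inE.
  case: (boolP (x \in BT)) => xB; last by rewrite orbC.
  by rewrite (subsetP BTT _ xB) !orbT.
have c1 : #|J| <= #|BT| + 1 by rewrite cardsU cards1; lia.
have c2 : rk M J <= #|J| := rk_card HM JE.
have c3 : rk M T <= rk M ([set e] :|: T) by apply: rk_mono HM (subsetUr _ _) eTE.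
have rJi : rk M J = #|J| by lia.
have cJ : #|J| = #|BT| + 1 by lia.
have eBTn : e \notin BT by apply/negP => /(subsetP BTT); apply/negP.
have [B [JB BE rB eB]] := basis_ext HM JE (subxx _) rJi.
have [BX [BXX rBX eBX]] := basis_ex HN XE.
have BXE : BX \subset ground N by apply: subset_trans BXX XE.
have [BN [BXN BNE rBN eBN]] := basis_ext HN BXE (subxx _) rBX.
have eB' : [set e] \subset B by apply: subset_trans JB; rewrite subsetUr.
have BTB : BT \subset B by apply: subset_trans JB; rewrite subsetUl.
set W := setX [set e] BX :|: setX BT BN.
have WB : W \subset setX B BN by rewrite subUset !setXS.
have rW := IND HM HN HT BE rB eB BNE rBN eBN WB.
have cW : #|W| = #|BX| + #|BT| * #|BN|.
  rewrite /W cardsU !cardsX cards1 mul1n.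
  have -> : setX [set e] BX :&: setX BT BN = set0.
    apply/setP => -[a b]; rewrite !inE /=.
    by case: (eqVneq a e) => [-> | ] //=; rewrite (negbTE eBTn) andbF.
  by rewrite cards0 subn0.
set Z := setX [set e] X :|: setX T (ground N).
have ZE : Z \subset ground P by rewrite gP subUset !setXS.
have WZ : W \subset Z by apply: setUSS; apply: setXS.
have nle : is_nonloop M e.
  by apply: (nonloop_of HM JE rJi); rewrite !inE eqxx orbT.
have sp1 : spans P W (setX [set e] X).
  have s : spans P (setX [set e] BX) (setX [set e] X).
    apply: spans_eqr; first by rewrite setXS.
    by rewrite (tp_row HT nle BXE) (tp_row HT nle XE).
  apply: (spans_mono HP _ _ s); first by rewrite subsetUl.
  by rewrite subUset (subset_trans WZ ZE) gP setXS.
have sp2 : spans P W (setX T (ground N)).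
  have s := UB HM HN HT BTT TE rBT eBT BNE rBN eBN.
  apply: (spans_mono HP _ _ s); first by rewrite subsetUr.
  by rewrite subUset (subset_trans WZ ZE) gP setXS.
have sp : spans P W Z.
  apply: spansU => //; by rewrite -setUA subUset (subset_trans WZ ZE).
have up : rk P Z <= rk P W.
  by apply: spans_le HP _ sp; rewrite subUset (subset_trans WZ ZE).
have lo : rk P W <= rk P Z by apply: rk_mono HP WZ ZE.
have -> : rk P Z = #|W| by apply/eqP; rewrite eqn_leq -rW up lo.
by rewrite cW rTE -eBX rBX -eBT rBT -eBN rBN addnK.
Qed.

Lemma col_minor (T1 T2 : finType) (M : matroid T1) (N : matroid T2) P
   (T : {set T1}) (f : T2) (X : {set T1}) :
  is_matroid M -> is_matroid N -> is_tensor_product M N P ->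
  T \subset ground M -> is_nonloop N f -> X \subset ground M ->
  rk P (setX X [set f] :|: setX T (ground N)) - rk P (setX T (ground N))
  = rk M (X :|: T) - rk M T.
Proof.
move=> HM HN HT TE nf XE.
have [fE nf0] := nf.
have HP := tp_matroid HT; have gP := tp_ground HT.
have [BT [BTT rBT eBT]] := basis_ex HM TE.
have BTE : BT \subset ground M by apply: subset_trans BTT TE.
have rTE := RX HM HN HT TE.
have XTE : X :|: T \subset ground M by rewrite subUset XE.
have BTXT : BT \subset X :|: T by apply: subset_trans BTT (subsetUr _ _).
have [B' [BTB' B'XT rB' eB']] := basis_ext HM BTXT XTE rBT.
have B'E : B' \subset ground M by apply: subset_trans B'XT XTE.
have [B [B'B BE rB eB]] := basis_ext HM B'E (subxx _) rB'.
have fE1 : [set f] \subset ground N by rewrite sub1set.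
have rf : rk N [set f] = #|[set f]|.
  have := rk_card HN fE1; rewrite cards1; move: nf0; case: (rk N [set f]) => [|[|]] //.
have [BN [fBN BNE rBN eBN]] := basis_ext HN fE1 (subxx _) rf.
have fBN' : f \in BN by rewrite -sub1set.
set W := setX (B' :\: BT) [set f] :|: setX BT BN.
have WB : W \subset setX B BN.
  rewrite subUset; apply/andP; split; apply: setXS => //.
  - exact: subset_trans (subsetDl _ _) B'B.
  - exact: subset_trans BTB' B'B.
have rW := IND HM HN HT BE rB eB BNE rBN eBN WB.
have cD : #|B' :\: BT| = #|B'| - #|BT| by rewrite cardsD (setIidPr BTB').
have cW : #|W| = (#|B'| - #|BT|) + #|BT| * #|BN|.
  rewrite /W cardsU !cardsX cards1 muln1 -cD.
  have -> : setX (B' :\: BT) [set f] :&: setX BT BN = set0.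
    apply/setP => -[a b]; rewrite !inE /=.
    by case: (a \in BT); rewrite ?andbF.
  by rewrite cards0 subn0.
set Z := setX X [set f] :|: setX T (ground N).
have ZE : Z \subset ground P by rewrite gP subUset !setXS.
have WZ : W \subset Z.
  rewrite subUset; apply/andP; split.
    apply/subsetP => -[a b]; rewrite in_setX in_setD in_set1 => /andP[/andP[_ aB'] /eqP ->].
    have := subsetP B'XT a aB'; rewrite in_setU => /orP[aX|aT].
      by rewrite in_setU in_setX aX in_set1 eqxx.
    by rewrite in_setU !in_setX aT fE orbT.
  by apply: subset_trans (subsetUr _ _); apply: setXS.
have sp1 : spans P W (setX X [set f]).
  have s : spans P (setX B' [set f]) (setX (X :|: T) [set f]).
    apply: spans_eqr; first by rewrite setXS.
    by rewrite (tp_col HT nf B'E) (tp_col HT nf XTE).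
  have s2 : spans P W (setX (X :|: T) [set f]).
    apply: (spans_mono HP _ _ s).
      apply/subsetP => -[a b]; rewrite in_setX in_set1 => /andP[aB' /eqP ->].
      rewrite in_setU !in_setX in_setD in_set1 eqxx fBN' aB' !andbT.
      by case: (a \in BT).
    by rewrite subUset (subset_trans WZ ZE) gP setXS.
  apply: (spans_subr HP _ s2); first by rewrite subUset (subset_trans WZ ZE) gP setXS.
  by rewrite setXS // subsetUl.
have sp2 : spans P W (setX T (ground N)).
  have s := UB HM HN HT BTT TE rBT eBT BNE rBN eBN.
  apply: (spans_mono HP _ _ s); first by rewrite subsetUr.
  by rewrite subUset (subset_trans WZ ZE) gP setXS.
have sp : spans P W Z.
  apply: spansU => //; by rewrite -setUA subUset (subset_trans WZ ZE).
have up : rk P Z <= rk P W.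
  by apply: spans_le HP _ sp; rewrite subUset (subset_trans WZ ZE).
have lo : rk P W <= rk P Z by apply: rk_mono HP WZ ZE.
have -> : rk P Z = #|W| by apply/eqP; rewrite eqn_leq -rW up lo.
have le : #|BT| <= #|B'| by apply: subset_leq_card.
rewrite cW rTE -eB' rB' -eBT rBT -eBN rBN addnK //.
Qed.

Unset Implicit Arguments.


Theorem proposition2p6 (T1 T2 : finType) (M : matroid T1) (N : matroid T2)
    (P : matroid (T1 * T2)%type) (S T : {set T1}) :
  is_matroid M -> is_matroid N -> is_tensor_product M N P ->
  S \subset ground M -> T \subset ground M -> [disjoint S & T] ->
  is_tensor_product (minor M S T) N
    (minor P (setX S (ground N)) (setX T (ground N))).
Proof.
move=> HM HN HT SE TE dST.
have HP := tp_matroid HT; have gP := tp_ground HT.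
have TE2 : setX T (ground N) \subset ground P by rewrite gP setXS.
have rTE := RX HM HN HT TE.
have gE : forall a, a \in (ground M :\: S) :\: T -> a \in ground M /\ a \notin T.
  by move=> a; rewrite !inE => /andP[aT /andP[_ aE]].
split; last first.
  rewrite /mrank /minor /mcontract /mdelete /= gP.
  have -> : (setX (ground M) (ground N) :\: setX S (ground N) :\: setX T (ground N))
            :|: setX T (ground N) = setX ((ground M :\: S) :\: T :|: T) (ground N).
    apply/setP => -[a b]; rewrite !(in_setU, in_setD, in_setX).
    by case: (a \in T); case: (a \in S); case: (a \in ground M); case: (b \in ground N).
  have AE : (ground M :\: S) :\: T :|: T \subset ground M.
    by rewrite subUset TE andbT; apply: subset_trans (subsetDl _ _) (subsetDl _ _).
  by rewrite (RX HM HN HT AE) rTE mulnBl.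
split.
- split; first by apply: minor_matroid.
  rewrite /minor /mcontract /mdelete /= gP.
  apply/setP => -[a b]; rewrite !(in_setU, in_setD, in_setX).
  by case: (a \in T); case: (a \in S); case: (a \in ground M); case: (b \in ground N).
- move=> e [eG ne] X XE; rewrite /= -setX1l.
  have [eE eT] := gE e eG.
  exact: (row_minor HM HN HT TE eE eT ne XE).
- move=> f nf X XG; rewrite /= -setX1r.
  apply: col_minor => //.
  apply: subset_trans XG _; apply: subset_trans (subsetDl _ _) (subsetDl _ _).
- move=> e [eG le] /=; have [eE eT] := gE e eG.
  apply/eqP; rewrite subn_eq0.
  have -> : setX [set e] (ground N) :|: setX T (ground N) = setX ([set e] :|: T) (ground N).
    apply/setP => -[a b]; rewrite !(in_setU, in_setX).
    by case: (a \in T); case: (a \in [set e]); case: (b \in ground N).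
  have AE : [set e] :|: T \subset ground M by rewrite subUset TE sub1set eE.
  rewrite (RX HM HN HT AE) rTE leq_mul2r; apply/orP; right.
  move: le; rewrite /=; lia.
- move=> f lf /=; apply/eqP; rewrite subn_eq0.
  have ZE : setX ((ground M :\: S) :\: T) [set f] \subset ground P.
    rewrite gP setXS // ?sub1set; last by case: lf.
    apply: subset_trans (subsetDl _ _) (subsetDl _ _).
  have z : rk P (setX ((ground M :\: S) :\: T) [set f]) = 0.
    apply/eqP; rewrite -leqn0 -(tp_loopN HT lf); apply: rk_mono HP _ _.
      by rewrite setXS // ; apply: subset_trans (subsetDl _ _) (subsetDl _ _).
    by rewrite gP setXS // sub1set; case: lf.
  have sp := spans_loop HP TE2 ZE z.
  by rewrite setUC sp.
Qed.
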